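(* Every irrevocable (non-wasteful) distribution policy is individually rational with respect to greedy players.
   Context: Players: a finite set $N=\{a_1,\dots,a_n\}$. A characteristic function is $v:2^N\to\mathbb{R}_{\ge 0}$ with $v(\emptyset)=0$, monotone and bounded: $\mathsf{min}\le v(S)\le v(T)\le\mathsf{max}$ for all nonempty $S\subseteq T\subseteq N$, for fixed constants $0<\mathsf{min}\le\mathsf{max}$. Online process: an arrival order is a permutation $\pi=(\pi_1,\dots,\pi_n)$ of $N$; player $\pi_t$ arrives at time $t$. For $S\subseteq N$, $\pi_{|S}$ denotes the players of $S$ in the relative order of $\pi$; $\pi_{|S}$ is a prefix of $\pi_{|T}$ if $S\subseteq T$ and the players of $S$ are the first $|S|$ players of $\pi_{|T}$. Let $C^{t-1}$ be the coalition structure of players arrived before time $t$ ($C^0=\emptyset$). At time $t$, player $\pi_t$ either joins an existing coalition $S\in C^{t-1}$ or forms $\{\pi_t\}$ (choice $S=\emptyset$); decisions are never revised. A distribution policy $\varphi$ assigns to every coalition $S$ with order $\pi_{|S}$ a vector $(\varphi_i(S,\pi_{|S}))_{i\in S}$ with $\sum_{i\in S}\varphi_i=v(S)$. It is irrevocable if for every $\pi$, every $S\subseteq T\subseteq N$ with $\pi_{|S}$ a prefix of $\pi_{|T}$ and every $i\in S$, $\varphi_i(S,\pi_{|S})\le\varphi_i(T,\pi_{|T})$. Greedy players: $\pi_t$ chooses $S\in C^{t-1}\cup\{\emptyset\}$ maximizing $\varphi_{\pi_t}(S\cup\{\pi_t\},\pi_{|S\cup\{\pi_t\}})$ (predetermined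 tie-breaking); $C_g^t$ is the structure after time $t$. Individual rationality: for every $v$ and $\pi$, every $t\le n$, every $S\in C_g^t$ and every $i\in S$, $\varphi_i(S,\pi_{|S})\ge v(\{i\})$. *)

(* Defs.v *)
From HB Require Import structures.
From mathcomp Require Import all_boot all_order all_algebra.
Set Implicit Arguments. Unset Strict Implicit. Unset Printing Implicit Defensive.
Import Order.TTheory GRing.Theory Num.Theory.
Local Open Scope ring_scope.

Section Defs.
Variables (T : finType) (R : realFieldType).

Definition arrival_order (pi : seq T) : Prop := perm_eq pi (enum T).

Definition restr (pi : seq T) (S : {set T}) : seq T := [seq x <- pi | x \in S].

Definition char_fun (mn mx : R) (v : {set T} -> R) : Prop :=
  [/\ v set0 = 0, forall S, 0 <= v S, 0 < mn, mn <= mx &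
      forall S U : {set T}, S != set0 -> S \subset U ->
        [/\ mn <= v S, v S <= v U & v U <= mx]].

(* A distribution policy phi (phi s i = share of i in the coalition whose
   players, in arrival order, are s) distributing exactly v(S). *)
Definition distribution_policy (v : {set T} -> R) (phi : seq T -> T -> R) : Prop :=
  forall pi, arrival_order pi -> forall S : {set T},
    \sum_(i in S) phi (restr pi S) i = v S.

Definition irrevocable (phi : seq T -> T -> R) : Prop :=
  forall pi, arrival_order pi -> forall S U : {set T}, S \subset U ->
    prefix (restr pi S) (restr pi U) ->
    forall i, i \in S -> phi (restr pi S) i <= phi (restr pi U) i.

(* Payoff of player p when joining S (S = set0 means forming {p}). *)
Definition join_value (phi : seq T -> T -> R) (pi : seq T) (S : {set T}) (p : T) : R :=
  phi (restr pi (S :|: [set p])) p.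

Definition update (C : seq {set T}) (S : {set T}) (p : T) : seq {set T} :=
  if S == set0 then [set p] :: C else (S :|: [set p]) :: rem S C.

Inductive greedy_run (phi : seq T -> T -> R) (pi : seq T) : nat -> seq {set T} -> Prop :=
| greedy0 : greedy_run phi pi 0 [::]
| greedyS t C S p : greedy_run phi pi t C -> (t < size pi)%N -> p = nth p pi t ->
    S \in set0 :: C ->
    (forall S', S' \in set0 :: C -> join_value phi pi S' p <= join_value phi pi S p) ->
    greedy_run phi pi t.+1 (update C S p).

End Defs.

(* Main.v *)
Require Import Defs.
From HB Require Import structures.
From mathcomp Require Import all_boot all_order all_algebra.
Import Order.TTheory GRing.Theory Num.Theory.
Local Open Scope ring_scope.

Lemma filter_take_eq (T : finType) (s : seq T) (S : {set T}) t :
  uniq s -> (forall x, x \in S -> x \in take t s) ->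
  [seq x <- s | x \in S] = [seq x <- take t s | x \in S].
Proof.
move=> us sub.
rewrite -{1}(cat_take_drop t s) filter_cat.
have: uniq (take t s ++ drop t s) by rewrite cat_take_drop.
rewrite cat_uniq => /and3P [_ hn _].
suff -> : [seq x <- drop t s | x \in S] = [::] by rewrite cats0.
apply/eqP; rewrite -[_ == _]negbK -has_filter; apply/hasP => -[x xd xS].
by move/negP: hn; apply; apply/hasP; exists x => //; apply: sub.
Qed.

Lemma restr_prefix (T : finType) (pi : seq T) (S : {set T}) t p :
  uniq pi -> (t < size pi)%N -> p = nth p pi t ->
  (forall x, x \in S -> x \in take t pi) ->
  prefix (restr pi S) (restr pi (S :|: [set p])).
Proof.
move=> us tl ep sub.
have hd : drop t pi = p :: drop t.+1 pi by rewrite {1}ep; apply: drop_nth.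
have pn : p \notin take t pi.
  have: uniq (take t pi ++ drop t pi) by rewrite cat_take_drop.
  rewrite cat_uniq hd => /and3P [_ /hasPn hn _].
  by apply: hn; rewrite inE eqxx.
rewrite /restr (@filter_take_eq _ _ _ _ us sub) -{2}(cat_take_drop t pi) filter_cat.
have -> : [seq x <- take t pi | x \in S :|: [set p]] = [seq x <- take t pi | x \in S].
  apply: eq_in_filter => x xt; rewrite !inE.
  case: eqP => [ex|]; last by rewrite orbF.
  by rewrite ex in xt; rewrite xt in pn.
exact: prefix_prefix.
Qed.

Theorem proposition2 (T : finType) (R : realFieldType) (mn mx : R)
  (v : {set T} -> R) (phi : seq T -> T -> R) :
  char_fun mn mx v -> distribution_policy v phi -> irrevocable phi ->
  forall pi : seq T, arrival_order pi ->
  forall (t : nat) (C : seq {set T}), greedy_run phi pi t C ->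
  forall S : {set T}, S \in C -> forall i, i \in S -> v [set i] <= phi (restr pi S) i.
Proof.
move=> _ hdist hirr pi hpi t C hrun.
have us : uniq pi by rewrite (perm_uniq hpi) enum_uniq.
have single : forall i, phi (restr pi [set i]) i = v [set i].
  by move=> i; rewrite -(hdist pi hpi [set i]) big_set1.
suff: forall S, S \in C ->
   (forall x, x \in S -> x \in take t pi) /\
   (forall i, i \in S -> v [set i] <= phi (restr pi S) i).
  by move=> H S SC; case: (H S SC).
elim: hrun => [|t0 C0 S0 p hr IH tl ep S0in hmax] /=; first by [].
have ht : take t0.+1 pi = rcons (take t0 pi) p.
  by rewrite {1}ep; apply: take_nth.
have sub1 : forall x, x \in take t0 pi -> x \in take t0.+1 pi.
  by move=> x; rewrite ht mem_rcons inE => ->; rewrite orbT.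
have pin : p \in take t0.+1 pi by rewrite ht mem_rcons inE eqxx.
move=> S; rewrite /update; case: (S0 =P set0) => [E|S0n].
  rewrite inE => /orP [/eqP ->|SC].
    split; first by move=> x; rewrite inE => /eqP ->.
    by move=> i; rewrite inE => /eqP ->; rewrite single.
  have [h1 h2] := IH S SC; split => // x /h1; exact: sub1.
have S0C : S0 \in C0 by move: S0in; rewrite inE => /orP [/eqP|] //.
have [h1 h2] := IH S0 S0C.
rewrite inE => /orP [/eqP ->|SC]; last first.
  have [h1' h2'] := IH S (mem_rem SC); split => // x /h1'; exact: sub1.
split.
  by move=> x; rewrite inE => /orP [/h1 /sub1 //|]; rewrite inE => /eqP ->.
move=> i; rewrite inE => /orP [iS|]; last first.
  rewrite inE => /eqP ->.
  have := hmax set0; rewrite inE eqxx /= => /(_ isT).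
  by rewrite /join_value set0U single.
apply: le_trans (h2 i iS) _.
apply: hirr => //; first exact: subsetUl.
exact: (@restr_prefix _ pi S0 t0 p us tl ep h1).
Qed.
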